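(* Let $\mathcal{X}$ be a measurable space, let $(X,Y)$ be a random pair with $X\in\mathcal{X}$, $Y\in\mathbb{R}$, and let $D=(X_i,Y_i)_{i=1}^N$ be an i.i.d. sample distributed as $(X,Y)$. Let $F$ be a convex class of functions $\mathcal{X}\to\mathbb{R}$ (with $\mathbb{E}f^2(X)<\infty$ for $f\in F$, $\mathbb{E}Y^2<\infty$), and let $f^*\in F$ satisfy $f^*=\operatorname{argmin}_{f\in F}\mathbb{E}(f(X)-Y)^2$. Let $n$ divide $N$, $m=N/n$, and let $I_1,\dots,I_n$ be the natural decomposition of $\{1,\dots,N\}$ into consecutive blocks of cardinality $m$. For $f,h\in F$ and $1\le j\le n$ set $$\mathbb{Q}_{f,h}(j)=\frac1m\sum_{i\in I_j}(f-h)^2(X_i),\qquad \mathbb{M}_{f,h}(j)=\frac2m\sum_{i\in I_j}(f-h)(X_i)\,(h(X_i)-Y_i),$$ $$\mathbb{B}_{f,h}(j)=\frac1m\sum_{i\in I_j}(f(X_i)-Y_i)^2-\frac1m\sum_{i\in I_j}(h(X_i)-Y_i)^2=\mathbb{Q}_{f,h}(j)+\mathbb{M}_{f,h}(j).$$ Let $\widetilde f\in F$ be a minimizer over $F$ of $\phi(f)=\max_{g\in F}\mathrm{Med}(\mathbb{B}_{f,g})$, where $\mathrm{Med}(\mathbb{B}_{f,g})$ is a median of the vector $(\mathbb{B}_{f,g}(j))_{j=1}^n$. Let $r>0$ and $\gamma_1,\gamma_2>0$, and suppose the sample $D$ satisfies: (1) for every $f\in F$ with $\|f-f^*\|_{L_2}\ge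 r$, one has $\mathbb{B}_{f,f^*}(j)\ge\gamma_1\|f-f^*\|_{L_2}^2$ for at least $0.99n$ of the blocks $j$; (2) for every $f\in F$ with $\|f-f^*\|_{L_2}<r$, one has $|\mathbb{M}_{f,f^*}(j)-\mathbb{E}\mathbb{M}_{f,f^*}(j)|\le\gamma_2r^2$ for at least $0.99n$ of the blocks $j$. If $\gamma_1>\gamma_2$, then $$\mathbb{E}\big((\widetilde f(X)-Y)^2\,\big|\,D\big)\le\mathbb{E}(f^*(X)-Y)^2+(1+2\gamma_2)r^2.$$
   Context: $\|f\|_{L_2}=(\mathbb{E}f^2(X))^{1/2}$ with respect to the distribution of $X$. For a fixed (non-random) function $f$, $\mathbb{E}\mathbb{M}_{f,f^*}(j)=2\mathbb{E}\big[(f-f^* )(X)(f^*(X)-Y)\big]$; for the data-dependent $\widetilde f$, $\mathbb{E}(\cdot\mid D)$ denotes expectation over an independent copy $(X,Y)$ with $D$ fixed. *)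

(* Defs.v *)
From HB Require Import structures.
From mathcomp Require Import all_boot all_order all_algebra.
From mathcomp Require Import all_classical all_reals all_analysis.
Set Implicit Arguments. Unset Strict Implicit. Unset Printing Implicit Defensive.
Import Order.TTheory GRing.Theory Num.Theory.
Local Open Scope ring_scope.

Section Defs.
Variables (d : measure_display) (T : measurableType d) (R : realType).

(* Sample D = (X_i,Y_i), indexed from 0: D i for i < N = n*m.
   Block j (0 <= j < n) is I_j = {j*m + k | k < m}. *)

Definition Qb (D : nat -> T * R) (m j : nat) (f h : T -> R) : R :=
  m%:R^-1 * \sum_(k < m) (f (D (j * m + k)%N).1 - h (D (j * m + k)%N).1) ^+ 2.

Definition Mb (D : nat -> T * R) (m j : nat) (f h : T -> R) : R :=
  2 / m%:R * \sum_(k < m) ((f (D (j * m + k)%N).1 - h (D (j * m + k)%N).1) *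
                          (h (D (j * m + k)%N).1 - (D (j * m + k)%N).2)).

Definition Bb (D : nat -> T * R) (m j : nat) (f h : T -> R) : R :=
  m%:R^-1 * \sum_(k < m) (f (D (j * m + k)%N).1 - (D (j * m + k)%N).2) ^+ 2
  - m%:R^-1 * \sum_(k < m) (h (D (j * m + k)%N).1 - (D (j * m + k)%N).2) ^+ 2.

Definition is_median (n : nat) (v : 'I_n -> R) (mu : R) : Prop :=
  (n%:R / 2 : R) <= #|[pred j : 'I_n | v j <= mu]|%:R /\
  (n%:R / 2 : R) <= #|[pred j : 'I_n | mu <= v j]|%:R.

Definition convex_class (F : set (T -> R)) : Prop :=
  forall f g, F f -> F g -> forall t : R, 0 <= t <= 1 ->
    F (fun x => t * f x + (1 - t) * g x).

(* L2 norm w.r.t. the distribution of X, where P is the law of (X,Y) *)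
Definition L2norm (P : probability (T * R)%type R) (f : T -> R) : R :=
  Num.sqrt (Rintegral P setT (fun z => (f z.1) ^+ 2)).

(* E M_{f,h}(j) = 2 E[(f-h)(X)(h(X)-Y)] *)
Definition EMb (P : probability (T * R)%type R) (f h : T -> R) : R :=
  2 * Rintegral P setT (fun z => (f z.1 - h z.1) * (h z.1 - z.2)).

Definition phi (F : set (T -> R)) (n m : nat) (D : nat -> T * R)
  (med : ('I_n -> R) -> R) (f : T -> R) : \bar R :=
  ereal_sup [set (med (fun j : 'I_n => Bb D m j f g))%:E | g in F]%classic.

End Defs.

(* Main.v *)
Require Import Defs.
From HB Require Import structures.
From mathcomp Require Import all_boot all_order all_algebra.
From mathcomp Require Import all_classical all_reals all_analysis.
From mathcomp Require Import ring lra measurable_realfun.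
Set Implicit Arguments. Unset Strict Implicit. Unset Printing Implicit Defensive.
Import Order.TTheory GRing.Theory Num.Theory.
Local Open Scope ring_scope.

Section Aux.
Context d (T : measurableType d) (R : realType) (P : probability (T * R)%type R).

Definition L2 (a : T * R -> R) : Prop := measurable_fun setT a /\
  P.-integrable setT (EFin \o (fun z => a z ^+ 2)).

Lemma intD (a b : T * R -> R) : P.-integrable setT (EFin \o a) ->
  P.-integrable setT (EFin \o b) ->
  P.-integrable setT (EFin \o (fun z => a z + b z)).
Proof.
move=> ia ib; exact: eq_integrable (integrableD _ ia ib).
Qed.

Lemma intZ (k : R) (a : T * R -> R) : P.-integrable setT (EFin \o a) ->
  P.-integrable setT (EFin \o (fun z => k * a z)).
Proof.
move=> ia; apply: (eq_integrable measurableT _ _ _ (integrableZl measurableT k ia)).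
by move=> z _ /=; rewrite EFinM.
Qed.

Lemma L2_mul a b : L2 a -> L2 b ->
  P.-integrable setT (EFin \o (fun z => a z * b z)).
Proof.
move=> [ma ia] [mb ib]; apply: (le_integrable measurableT _ _ (intD ia ib)) => //.
  by apply/measurable_EFinP; exact: measurable_funM.
move=> z _ /=; rewrite lee_fin normrM; apply: (le_trans _ (ler_norm _)).
have ha := normr_ge0 (a z); have hb := normr_ge0 (b z).
have ea : `|a z| ^+ 2 = a z ^+ 2 by rewrite real_normK // num_real.
have eb : `|b z| ^+ 2 = b z ^+ 2 by rewrite real_normK // num_real.
rewrite -ea -eb; nra.
Qed.

Lemma L2B a b : L2 a -> L2 b -> L2 (fun z => a z - b z).
Proof.
move=> La Lb; split; first by apply: measurable_funB; [case: La|case: Lb].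
have i := intD (intD (L2_mul La La) (L2_mul Lb Lb)) (intZ (-2) (L2_mul La Lb)).
apply: (eq_integrable measurableT _ _ _ i) => z _ /=; congr EFin; ring.
Qed.

Lemma decomp a b y : L2 a -> L2 b -> L2 y ->
  Rintegral P setT (fun z => (a z - y z) ^+ 2) =
  Rintegral P setT (fun z => (b z - y z) ^+ 2) +
  Rintegral P setT (fun z => (a z - b z) ^+ 2) +
  2 * Rintegral P setT (fun z => (a z - b z) * (b z - y z)).
Proof.
move=> La Lb Ly; have Lab := L2B La Lb; have Lby := L2B Lb Ly.
have i1 := Lby.2; have i2 := Lab.2; have i3 := intZ 2 (L2_mul Lab Lby).
rewrite -RintegralZl //; last exact: L2_mul.
rewrite -RintegralD // -RintegralD //; last exact: intD.
by apply: eq_Rintegral => z _; ring.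
Qed.

Lemma decompF (f h : T -> R) : L2 (fun z => f z.1) -> L2 (fun z => h z.1) ->
  L2 (fun z => z.2) ->
  Rintegral P setT (fun z => (f z.1 - z.2) ^+ 2) =
  Rintegral P setT (fun z => (h z.1 - z.2) ^+ 2) +
  Rintegral P setT (fun z => (f z.1 - h z.1) ^+ 2) + EMb P f h.
Proof. by move=> Lf Lh Ly; rewrite /EMb (decomp Lf Lh Ly). Qed.

Lemma intE (a : T * R -> R) : P.-integrable setT (EFin \o a) ->
  (\int[P]_z (a z)%:E = (Rintegral P setT a)%:E)%E.
Proof. by move=> ia; rewrite /Rintegral fineK // integrable_fin_num. Qed.

End Aux.

Lemma common (R : realType) (n : nat) (A B : pred 'I_n) : (0 < n)%N ->
  (n%:R / 2 : R) <= #|A|%:R -> (99 / 100 * n%:R : R) <= #|B|%:R ->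
  exists j, A j && B j.
Proof.
move=> n0 hA hB; case: (pickP [predI A & B]) => [j Hj|H0]; first by exists j.
have h0 : #|[predI A & B]| = 0%N by apply: eq_card0.
have hUI := cardUI A B; rewrite h0 addn0 in hUI.
have hU := max_card [predU A & B]; rewrite card_ord hUI in hU.
move: hU; rewrite -(ler_nat R) natrD => hU.
have : (0 : R) < n%:R by rewrite ltr0n.
lra.
Qed.

Lemma tpick (R : realType) (c E : R) : 0 <= c ->
  (forall t, 0 < t <= 1 -> 0 <= t ^+ 2 * c + t * E) -> 0 <= E.
Proof.
move=> c0 H; rewrite leNgt; apply/negP => E0.
have s0 : 0 < c - E by lra.
set t := - E / (2 * (c - E)).
have ht : t * (2 * (c - E)) = - E by rewrite /t divfK // mulf_neq0 // gt_eqF.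
have t0 : 0 < t by rewrite /t divr_gt0 // ?oppr_gt0 // mulr_gt0.
have t1 : t <= 1 by nra.
have := H t; rewrite t0 t1 => /(_ isT) h.
have h1 : 0 <= t * c + E.
  have : 0 <= t * (t * c + E) by rewrite mulrDr mulrA -expr2.
  by rewrite pmulr_rge0.
have : 0 <= (2 * (c - E)) * (t * c + E) by rewrite mulr_ge0 //; lra.
nra.
Qed.

Lemma BbN d (T : measurableType d) (R : realType) (D : nat -> T * R) m j f h :
  Bb D m j f h = - Bb D m j h f.
Proof. by rewrite /Bb opprB. Qed.

Lemma BQM d (T : measurableType d) (R : realType) (D : nat -> T * R) m j f h :
  Bb D m j f h = Qb D m j f h + Mb D m j f h.
Proof.
rewrite /Bb /Qb /Mb !mulr_sumr -sumrB -big_split; apply: eq_bigr => k _ /=.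
ring.
Qed.

Lemma Qb_ge0 d (T : measurableType d) (R : realType) (D : nat -> T * R) m j f h :
  0 <= Qb D m j f h.
Proof.
rewrite /Qb mulr_ge0 ?invr_ge0 ?ler0n // sumr_ge0 // => k _; exact: sqr_ge0.
Qed.

Theorem theorem1 (d : measure_display) (T : measurableType d) (R : realType)
  (P : probability (T * R)%type R)
  (F : set (T -> R)) (fs : T -> R)
  (n m : nat) (D : nat -> T * R)
  (med : ('I_n -> R) -> R) (ft : T -> R)
  (r gamma1 gamma2 : R) :
  (0 < n)%N -> (0 < m)%N ->
  convex_class F ->
  (forall f, F f -> measurable_fun setT f) ->
  (forall f, F f -> P.-integrable setT (fun z => ((f z.1) ^+ 2)%:E)) ->
  P.-integrable setT (fun z => ((z.2) ^+ 2)%:E) ->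
  F fs ->
  (forall f, F f -> (\int[P]_z (((fs z.1 - z.2) ^+ 2)%:E) <=
                     \int[P]_z (((f z.1 - z.2) ^+ 2)%:E))%E) ->
  (forall v, is_median v (med v)) ->
  F ft ->
  (forall f, F f -> (phi F m D med ft <= phi F m D med f)%E) ->
  0 < r -> 0 < gamma1 -> 0 < gamma2 ->
  (forall f, F f -> r <= L2norm P (fun x => f x - fs x) ->
     (99 / 100 * n%:R : R) <=
     #|[pred j : 'I_n | gamma1 * L2norm P (fun x => f x - fs x) ^+ 2 <= Bb D m j f fs]|%:R) ->
  (forall f, F f -> L2norm P (fun x => f x - fs x) < r ->
     (99 / 100 * n%:R : R) <=
     #|[pred j : 'I_n | `|Mb D m j f fs - EMb P f fs| <= gamma2 * r ^+ 2]|%:R) ->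
  gamma2 < gamma1 ->
  (\int[P]_z (((ft z.1 - z.2) ^+ 2)%:E) <=
   \int[P]_z (((fs z.1 - z.2) ^+ 2)%:E) + ((1 + 2 * gamma2) * r ^+ 2)%:E)%E.
Proof.
move=> n0 m0 cvx Fmeas Fint Yint Ffs opt hmed Fft phimin r0 g10 g20 H1 H2 g21.
have Lf : forall f, F f -> L2 P (fun z => f z.1).
  move=> f Ff; split; last exact: Fint.
  by apply: measurableT_comp; [exact: Fmeas|exact: measurable_fst].
have Ly : L2 P (fun z => z.2) by split => //; exact: measurable_snd.
have nrm : forall f, F f -> L2norm P (fun x => f x - fs x) ^+ 2 =
    Rintegral P setT (fun z => (f z.1 - fs z.1) ^+ 2).
  move=> f Ff; rewrite /L2norm sqr_sqrtr //; apply: Rintegral_ge0 => z _.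
  exact: sqr_ge0.
have Eint : forall f, F f -> (\int[P]_z (((f z.1 - z.2) ^+ 2)%:E) =
    (Rintegral P setT (fun z => (f z.1 - z.2) ^+ 2))%:E)%E.
  by move=> f Ff; apply: intE; exact: (L2B (Lf f Ff) Ly).2.
have gr0 : 0 <= gamma2 * r ^+ 2 by apply: mulr_ge0; [exact: ltW|exact: sqr_ge0].
have EM0 : forall g, F g -> 0 <= EMb P g fs.
  move=> g Fg; apply: (@tpick R (Rintegral P setT (fun z => (g z.1 - fs z.1) ^+ 2))).
    by apply: Rintegral_ge0 => z _; exact: sqr_ge0.
  move=> t /andP[t0 t1].
  pose gt := fun x => t * g x + (1 - t) * fs x.
  have Fgt : F gt by apply: cvx => //; rewrite ltW.
  have := opt gt Fgt; rewrite !Eint // lee_fin.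
  rewrite (decompF (Lf gt Fgt) (Lf fs Ffs) Ly).
  have e1 : Rintegral P setT (fun z => (gt z.1 - fs z.1) ^+ 2) =
      t ^+ 2 * Rintegral P setT (fun z => (g z.1 - fs z.1) ^+ 2).
    rewrite -RintegralZl //; last exact: (L2B (Lf g Fg) (Lf fs Ffs)).2.
    by apply: eq_Rintegral => z _; rewrite /gt; ring.
  have e2 : EMb P gt fs = t * EMb P g fs.
    rewrite /EMb mulrCA; congr (_ * _).
    rewrite -RintegralZl //; last first.
      exact: L2_mul (L2B (Lf g Fg) (Lf fs Ffs)) (L2B (Lf fs Ffs) Ly).
    by apply: eq_Rintegral => z _; rewrite /gt; ring.
  rewrite e1 e2; lra.
have phifs : (phi F m D med fs <= (gamma2 * r ^+ 2)%:E)%E.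
  apply: ge_ereal_sup => _ [g Fg <-]; rewrite lee_fin.
  have [_ hm2] := hmed (fun j : 'I_n => Bb D m j fs g).
  have [L|L] := leP r (L2norm P (fun x => g x - fs x)).
    have [j /andP[/= j1 j2]] := common n0 hm2 (H1 g Fg L).
    rewrite BbN in j1.
    have : 0 <= gamma1 * L2norm P (fun x => g x - fs x) ^+ 2.
      by apply: mulr_ge0; [exact: ltW|exact: sqr_ge0].
    lra.
  have [j /andP[/= j1 j2]] := common n0 hm2 (H2 g Fg L).
  rewrite BbN BQM in j1.
  have := Qb_ge0 D m j g fs; have := EM0 g Fg.
  move: j2; rewrite ler_norml => /andP[j2 j3].
  lra.
have phift := le_trans (phimin fs Ffs) phifs.
have Bft : med (fun j => Bb D m j ft fs) <= gamma2 * r ^+ 2.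
  rewrite -lee_fin; apply: le_trans phift; apply: ereal_sup_ubound; by exists fs.
have [hm1 _] := hmed (fun j : 'I_n => Bb D m j ft fs).
have [L|L] := leP r (L2norm P (fun x => ft x - fs x)).
  exfalso.
  have [j /andP[/= j1 j2]] := common n0 hm1 (H1 ft Fft L).
  set l := L2norm P (fun x => ft x - fs x) in L j2.
  have hL : r ^+ 2 <= l ^+ 2 by rewrite !expr2 ler_pM // ltW.
  have : gamma1 * r ^+ 2 <= gamma1 * l ^+ 2 by rewrite ler_wpM2l // ltW.
  have : gamma2 * r ^+ 2 < gamma1 * r ^+ 2 by rewrite ltr_pM2r // exprn_gt0.
  lra.
have [j /andP[/= j1 j2]] := common n0 hm1 (H2 ft Fft L).
rewrite BQM in j1.
have := Qb_ge0 D m j ft fs.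
move: j2; rewrite ler_norml => /andP[j2 j3].
rewrite !Eint // -EFinD lee_fin (decompF (Lf ft Fft) (Lf fs Ffs) Ly) -nrm //.
have hl := sqrtr_ge0 (Rintegral P setT (fun z => (ft z.1 - fs z.1) ^+ 2)).
have hL : L2norm P (fun x => ft x - fs x) ^+ 2 <= r ^+ 2.
  by rewrite !expr2 ler_pM // ltW.
lra.
Qed.
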